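(* Let $K$ be the knot $6_2=K(11,3)$. For every $r\in(0,8)\cap\mathbb{Q}$, the fundamental group $\pi_1(S^3_r(K))$ admits a non-abelian representation into $SL(2,\mathbb{R})$.
   Context: $S^3_r(K)$ denotes Dehn surgery on $K$ with slope $r$. *)

(* Defs.v *)
From HB Require Import structures.
From mathcomp Require Import all_boot all_order all_algebra.
From mathcomp Require Import Rstruct.
Set Implicit Arguments. Unset Strict Implicit. Unset Printing Implicit Defensive.
Import Order.TTheory GRing.Theory Num.Theory.
Local Open Scope ring_scope.

(* Schubert/Riley presentation of the group of the two-bridge knot     *)
(* K(p,q) (p odd, q odd, 0 < q < p):                                   *)
(*   pi_1(S^3 - K(p,q)) = < a, b | w a = b w >,                        *)
(* with a = meridian and preferred longitude                           *)
(*   lambda = (w reversed) * w * a^{-2 sigma},  sigma = sum_i e_i.     *)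
(* (With this convention K(3,1) is the right-handed trefoil, whose      *)
(*  Seifert-fibre slope is +6.)                                        *)

Definition tb_eps (p q i : nat) : int := if odd (i * q %/ p) then -1 else 1.

Definition tb_sigma (p q : nat) : int := \sum_(1 <= i < p) tb_eps p q i.

Definition tb_letter (G : unitRingType) (a b : G) (i : nat) : G :=
  if odd i then a else b.

Definition tb_w (p q : nat) (G : unitRingType) (a b : G) : G :=
  \prod_(1 <= i < p) tb_letter a b i ^ tb_eps p q i.

Definition tb_wrev (p q : nat) (G : unitRingType) (a b : G) : G :=
  \prod_(1 <= i < p) tb_letter a b (p - i) ^ tb_eps p q (p - i).

Definition tb_longitude (p q : nat) (G : unitRingType) (a b : G) : G :=
  tb_wrev p q a b * tb_w p q a b * a ^ (- (2 * tb_sigma p q)).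

(* A homomorphism pi_1(S^3_r(K(p,q))) -> SL(2,R), r = m/n in lowest terms,
   is the same as a pair (A, B) of matrices of determinant 1 (the images of
   the generators a, b) satisfying the knot relation w a = b w and the
   surgery relation mu^m lambda^n = 1 with mu = a.  Its image is the
   subgroup generated by A and B, which is non-abelian iff A B <> B A. *)
Definition SL2R_rep_surgery (p q : nat) (r : rat) (A B : 'M[Rdefinitions.R]_2) : Prop :=
  [/\ \det A = 1, \det B = 1,
      tb_w p q A B * A = B * tb_w p q A B &
      A ^ (numq r) * tb_longitude p q A B ^ (denq r) = 1].

Definition nonabelian_SL2R_rep_surgery (p q : nat) (r : rat) : Prop :=
  exists A B : 'M[Rdefinitions.R]_2, SL2R_rep_surgery p q r A B /\ A * B != B * A.

(* Main.v *)
Require Import Defs.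
From HB Require Import structures.
From mathcomp Require Import all_boot all_order all_algebra.
From mathcomp Require Import Rstruct.
From mathcomp Require Import zify ring lra.
Import Order.TTheory GRing.Theory Num.Theory.
Local Open Scope ring_scope.
Local Notation R := Rdefinitions.R.
Ltac mring := ring.
Ltac mfield := field.
Ltac mlra := lra.
Ltac mnra := nra.
Definition mx2 (a b c d : R) : 'M[R]_2 :=
  \matrix_(i < 2, j < 2) (if i == 0 :> nat then (if j == 0 :> nat then a else b)
                          else (if j == 0 :> nat then c else d)).

Ltac ord2_cases i :=
  let k := fresh "k" in let Hk := fresh "Hk" in
  case: i => [[|[|k]] Hk] //=.

Lemma mx2_mul a b c d e f g h :
  mx2 a b c d * mx2 e f g h = mx2 (a*e+b*g) (a*f+b*h) (c*e+d*g) (c*f+d*h).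
Proof.
apply/matrixP => i j; rewrite !mxE !big_ord_recl !big_ord0 !mxE /=.
by ord2_cases i; ord2_cases j; rewrite addr0.
Qed.

Lemma mx2_1 : (1 : 'M[R]_2) = mx2 1 0 0 1.
Proof.
apply/matrixP => i j; rewrite !mxE.
by ord2_cases i; ord2_cases j.
Qed.

Lemma mx2_inj a b c d a' b' c' d' :
  a = a' -> b = b' -> c = c' -> d = d' -> mx2 a b c d = mx2 a' b' c' d'.
Proof. by move=> -> -> -> ->. Qed.

Lemma mx2_det a b c d : \det (mx2 a b c d) = a * d - b * c.
Proof.
rewrite (expand_det_row _ 0) !big_ord_recl big_ord0 /cofactor !mxE /=.
rewrite !det_mx11 !mxE /=. rewrite !expr0 !expr1. ring.
Qed.

Lemma mx2_inv a b c d : a * d - b * c = 1 -> (mx2 a b c d)^-1 = mx2 d (-b) (-c) a.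
Proof.
move=> H.
have H1 : mx2 a b c d * mx2 d (-b) (-c) a = 1.
  rewrite mx2_mul mx2_1; apply: mx2_inj; (try rewrite -H); ring.
have H2 : mx2 d (-b) (-c) a * mx2 a b c d = 1.
  rewrite mx2_mul mx2_1; apply: mx2_inj; (try rewrite -H); ring.
have Hu : mx2 a b c d \is a GRing.unit by apply/unitrP; exists (mx2 d (-b) (-c) a).
by rewrite -[LHS]mulr1 -H1 mulKr.
Qed.

Lemma mx2_neq01 a b c d a' b' c' d' : b <> b' -> mx2 a b c d <> mx2 a' b' c' d'.
Proof.
move=> Hb E; apply: Hb.
have := congr1 (fun X : 'M[R]_2 => X 0 1) E; by rewrite !mxE.
Qed.
Lemma tbw_eq (G : unitRingType) (a b : G) :
  tb_w 11 3 a b = a * b * a * b^-1 * a^-1 * b^-1 * a^-1 * b * a * b.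
Proof.
rewrite /tb_w /index_iota /= !big_cons big_nil /tb_letter /tb_eps /=.
by rewrite !expr1z !exprN1 !mulrA mulr1.
Qed.

Lemma tbwrev_eq (G : unitRingType) (a b : G) :
  tb_wrev 11 3 a b = b * a * b * a^-1 * b^-1 * a^-1 * b^-1 * a * b * a.
Proof.
rewrite /tb_wrev /index_iota /= !big_cons big_nil /tb_letter /tb_eps /=.
by rewrite !expr1z !exprN1 !mulrA mulr1.
Qed.

Lemma tbsig : tb_sigma 11 3 = 2.
Proof. by rewrite /tb_sigma /index_iota /= !big_cons big_nil /tb_eps /=. Qed.

Lemma tblong_eq (G : unitRingType) (a b : G) :
  tb_longitude 11 3 a b = tb_wrev 11 3 a b * tb_w 11 3 a b * (a^-1 * a^-1 * a^-1 * a^-1).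
Proof.
rewrite /tb_longitude tbsig.
have -> : (- (2 * 2) : int) = - (4%:Z) by [].
rewrite -exprz_inv -exprnP.
by rewrite !exprS expr0 mulr1 !mulrA.
Qed.
Definition W00 (M y : R) : R := (M^-1 ^+ 6 * y ^+ 2 - 2 * M^-1 ^+ 4 * y ^+ 2 + 3 * M^-1 ^+ 4 * y ^+ 3 - 2 * M^-1 ^+ 2 * y + 5 * M^-1 ^+ 2 * y ^+ 2 - 4 * M^-1 ^+ 2 * y ^+ 3 + 3 * M^-1 ^+ 2 * y ^+ 4 + 3 * y - 8 * y ^+ 2 + 9 * y ^+ 3 - 2 * y ^+ 4 + y ^+ 5 + M ^+ 2 - 4 * M ^+ 2 * y + 9 * M ^+ 2 * y ^+ 2 - 6 * M ^+ 2 * y ^+ 3 + 4 * M ^+ 2 * y ^+ 4 + 3 * M ^+ 4 * y - 6 * M ^+ 4 * y ^+ 2 + 6 * M ^+ 4 * y ^+ 3 - 2 * M ^+ 6 * y + 4 * M ^+ 6 * y ^+ 2 + M ^+ 8 * y).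
Definition V00 (M y : R) : R := (M^-1 ^+ 2 * y ^+ 2 + 2 * y - 2 * y ^+ 2 + 2 * y ^+ 3 + M ^+ 2 - 2 * M ^+ 2 * y + 5 * M ^+ 2 * y ^+ 2 - 2 * M ^+ 2 * y ^+ 3 + M ^+ 2 * y ^+ 4 + 3 * M ^+ 4 * y - 4 * M ^+ 4 * y ^+ 2 + 3 * M ^+ 4 * y ^+ 3 - 2 * M ^+ 6 * y + 3 * M ^+ 6 * y ^+ 2 + M ^+ 8 * y).
Definition L00 (M y : R) : R := (M^-1 ^+ 16 * y ^+ 3 + M^-1 ^+ 14 * y ^+ 2 - 4 * M^-1 ^+ 14 * y ^+ 3 + 6 * M^-1 ^+ 14 * y ^+ 4 - 4 * M^-1 ^+ 12 * y ^+ 2 + 16 * M^-1 ^+ 12 * y ^+ 3 - 19 * M^-1 ^+ 12 * y ^+ 4 + 15 * M^-1 ^+ 12 * y ^+ 5 - M^-1 ^+ 10 * y + 12 * M^-1 ^+ 10 * y ^+ 2 - 36 * M^-1 ^+ 10 * y ^+ 3 + 56 * M^-1 ^+ 10 * y ^+ 4 - 35 * M^-1 ^+ 10 * y ^+ 5 + 20 * M^-1 ^+ 10 * y ^+ 6 + 3 * M^-1 ^+ 8 * y - 23 * M^-1 ^+ 8 * y ^+ 2 + 68 * M^-1 ^+ 8 * y ^+ 3 - 90 * M^-1 ^+ 8 * y ^+ 4 + 84 * M^-1 ^+ 8 * y ^+ 5 - 30 * M^-1 ^+ 8 * y ^+ 6 + 15 * M^-1 ^+ 8 * y ^+ 7 -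 5 * M^-1 ^+ 6 * y + 32 * M^-1 ^+ 6 * y ^+ 2 - 80 * M^-1 ^+ 6 * y ^+ 3 + 121 * M^-1 ^+ 6 * y ^+ 4 - 87 * M^-1 ^+ 6 * y ^+ 5 + 61 * M^-1 ^+ 6 * y ^+ 6 - 10 * M^-1 ^+ 6 * y ^+ 7 + 6 * M^-1 ^+ 6 * y ^+ 8 + 5 * M^-1 ^+ 4 * y - 26 * M^-1 ^+ 4 * y ^+ 2 + 68 * M^-1 ^+ 4 * y ^+ 3 - 77 * M^-1 ^+ 4 * y ^+ 4 + 77 * M^-1 ^+ 4 * y ^+ 5 - 21 * M^-1 ^+ 4 * y ^+ 6 + 20 * M^-1 ^+ 4 * y ^+ 7 + M^-1 ^+ 4 * y ^+ 8 + M^-1 ^+ 4 * y ^+ 9 + 8 * M^-1 ^+ 2 * y ^+ 2 - 8 * M^-1 ^+ 2 * y ^+ 3 + 11 * M^-1 ^+ 2 * y ^+ 4 + 20 * M^-1 ^+ 2 * y ^+ 5 + 3 * M^-1 ^+ 2 * y ^+ 6 + 15 * M^-1 ^+ 2 * y ^+ 7 + 2 * M^-1 ^+ 2 * y ^+ 8 + M^-1 ^+ 2 * y ^+ 9 + 1 - 3 * y + 17 * y ^+ 2 - 44 * y ^+ 3 + 88 * y ^+ 4 - 68 * y ^+ 5 + 60 * y ^+ 6 - 9 * y ^+ 7 + 7 * y ^+ 8 + 5 * M ^+ 2 * y - 28 * M ^+ 2 * y ^+ 2 + 84 * M ^+ 2 * y ^+ 3 - 112 * M ^+ 2 * y ^+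 4 + 110 * M ^+ 2 * y ^+ 5 - 40 * M ^+ 2 * y ^+ 6 + 21 * M ^+ 2 * y ^+ 7 - 4 * M ^+ 4 * y + 29 * M ^+ 4 * y ^+ 2 - 72 * M ^+ 4 * y ^+ 3 + 105 * M ^+ 4 * y ^+ 4 - 65 * M ^+ 4 * y ^+ 5 + 35 * M ^+ 4 * y ^+ 6 + 2 * M ^+ 6 * y - 17 * M ^+ 6 * y ^+ 2 + 51 * M ^+ 6 * y ^+ 3 - 54 * M ^+ 6 * y ^+ 4 + 35 * M ^+ 6 * y ^+ 5 + 10 * M ^+ 8 * y ^+ 2 - 23 * M ^+ 8 * y ^+ 3 + 21 * M ^+ 8 * y ^+ 4 - 4 * M ^+ 10 * y ^+ 2 + 7 * M ^+ 10 * y ^+ 3 + M ^+ 12 * y ^+ 2).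
Definition W01 (M y : R) : R := (M^-1 ^+ 7 * y - 2 * M^-1 ^+ 5 * y + 3 * M^-1 ^+ 5 * y ^+ 2 - M^-1 ^+ 3 + 4 * M^-1 ^+ 3 * y - 4 * M^-1 ^+ 3 * y ^+ 2 + 3 * M^-1 ^+ 3 * y ^+ 3 + 2 * M^-1 - 5 * M^-1 * y + 7 * M^-1 * y ^+ 2 - 2 * M^-1 * y ^+ 3 + M^-1 * y ^+ 4 - M + 5 * M * y - 4 * M * y ^+ 2 + 3 * M * y ^+ 3 + M ^+ 3 - 2 * M ^+ 3 * y + 3 * M ^+ 3 * y ^+ 2 + M ^+ 5 * y).
Definition V01 (M y : R) : R := (M^-1 ^+ 5 * y + M^-1 ^+ 3 - 2 * M^-1 ^+ 3 * y + 3 * M^-1 ^+ 3 * y ^+ 2 - M^-1 + 5 * M^-1 * y - 4 * M^-1 * y ^+ 2 + 3 * M^-1 * y ^+ 3 + 2 * M - 5 * M * y + 7 * M * y ^+ 2 - 2 * M * y ^+ 3 + M * y ^+ 4 - M ^+ 3 + 4 * M ^+ 3 * y - 4 * M ^+ 3 * y ^+ 2 + 3 * M ^+ 3 * y ^+ 3 - 2 * M ^+ 5 * y + 3 * M ^+ 5 * y ^+ 2 + M ^+ 7 * y).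
Definition L01 (M y : R) : R := (- M^-1 ^+ 15 * y ^+ 3 - M^-1 ^+ 13 * y ^+ 2 + 3 * M^-1 ^+ 13 * y ^+ 3 - 6 * M^-1 ^+ 13 * y ^+ 4 + 3 * M^-1 ^+ 11 * y ^+ 2 - 13 * M^-1 ^+ 11 * y ^+ 3 + 13 * M^-1 ^+ 11 * y ^+ 4 - 15 * M^-1 ^+ 11 * y ^+ 5 + M^-1 ^+ 9 * y - 8 * M^-1 ^+ 9 * y ^+ 2 + 23 * M^-1 ^+ 9 * y ^+ 3 - 43 * M^-1 ^+ 9 * y ^+ 4 + 20 * M^-1 ^+ 9 * y ^+ 5 - 20 * M^-1 ^+ 9 * y ^+ 6 - M^-1 ^+ 7 * y + 10 * M^-1 ^+ 7 * y ^+ 2 - 38 * M^-1 ^+ 7 * y ^+ 3 + 47 * M^-1 ^+ 7 * y ^+ 4 - 64 * M^-1 ^+ 7 * y ^+ 5 + 10 * M^-1 ^+ 7 * y ^+ 6 - 15 * M^-1 ^+ 7 * y ^+ 7 - 2 * M^-1 ^+ 5 * y ^+ 2 + 13 * M^-1 ^+ 5 * y ^+ 3 - 53 * M^-1 ^+ 5 * y ^+ 4 + 23 * M^-1 ^+ 5 * y ^+ 5 - 51 * M^-1 ^+ 5 * y ^+ 6 - 5 * M^-1 ^+ 5 * y ^+ 7 - 6 * M^-1 ^+ 5 * y ^+ 8 + 6 * M^-1 ^+ 3 * y - 23 * M^-1 ^+ 3 * y ^+ 2 + 31 * M^-1 ^+ 3 * y ^+ 3 - 45 * M^-1 ^+ 3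 * y ^+ 4 - 19 * M^-1 ^+ 3 * y ^+ 5 - 30 * M^-1 ^+ 3 * y ^+ 6 - 25 * M^-1 ^+ 3 * y ^+ 7 - 7 * M^-1 ^+ 3 * y ^+ 8 - M^-1 ^+ 3 * y ^+ 9 + M^-1 - 14 * M^-1 * y + 55 * M^-1 * y ^+ 2 - 117 * M^-1 * y ^+ 3 + 109 * M^-1 * y ^+ 4 - 124 * M^-1 * y ^+ 5 + 2 * M^-1 * y ^+ 6 - 40 * M^-1 * y ^+ 7 - 9 * M^-1 * y ^+ 8 - 2 * M^-1 * y ^+ 9 - 2 * M + 16 * M * y - 70 * M * y ^+ 2 + 142 * M * y ^+ 3 - 206 * M * y ^+ 4 + 109 * M * y ^+ 5 - 113 * M * y ^+ 6 - 10 * M * y ^+ 7 - 16 * M * y ^+ 8 - 2 * M * y ^+ 9 - 11 * M ^+ 3 * y + 50 * M ^+ 3 * y ^+ 2 - 124 * M ^+ 3 * y ^+ 3 + 130 * M ^+ 3 * y ^+ 4 - 149 * M ^+ 3 * y ^+ 5 + 13 * M ^+ 3 * y ^+ 6 - 46 * M ^+ 3 * y ^+ 7 - 9 * M ^+ 3 * y ^+ 8 - 2 * M ^+ 3 * y ^+ 9 - 2 * M ^+ 5 * y - 5 * M ^+ 5 * y ^+ 2 + 16 * M ^+ 5 * y ^+ 3 - 52 * M ^+ 5 * y ^+ 4 - 7 * M ^+ 5 * y ^+ 5 - 43 * M ^+ 5 * y ^+ 6 - 26 * M ^+ 5 * y ^+ 7 - 8 * M ^+ 5 * y ^+ 8 -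 M ^+ 5 * y ^+ 9 - 2 * M ^+ 7 + 13 * M ^+ 7 * y - 40 * M ^+ 7 * y ^+ 2 + 59 * M ^+ 7 * y ^+ 3 - 90 * M ^+ 7 * y ^+ 4 + 39 * M ^+ 7 * y ^+ 5 - 65 * M ^+ 7 * y ^+ 6 - 6 * M ^+ 7 * y ^+ 7 - 7 * M ^+ 7 * y ^+ 8 + M ^+ 9 - 14 * M ^+ 9 * y + 52 * M ^+ 9 * y ^+ 2 - 109 * M ^+ 9 * y ^+ 3 + 114 * M ^+ 9 * y ^+ 4 - 110 * M ^+ 9 * y ^+ 5 + 20 * M ^+ 9 * y ^+ 6 - 21 * M ^+ 9 * y ^+ 7 + 10 * M ^+ 11 * y - 46 * M ^+ 11 * y ^+ 2 + 88 * M ^+ 11 * y ^+ 3 - 107 * M ^+ 11 * y ^+ 4 + 50 * M ^+ 11 * y ^+ 5 - 35 * M ^+ 11 * y ^+ 6 - 5 * M ^+ 13 * y + 25 * M ^+ 13 * y ^+ 2 - 54 * M ^+ 13 * y ^+ 3 + 48 * M ^+ 13 * y ^+ 4 - 35 * M ^+ 13 * y ^+ 5 + M ^+ 15 * y - 11 * M ^+ 15 * y ^+ 2 + 22 * M ^+ 15 * y ^+ 3 - 21 * M ^+ 15 * y ^+ 4 + 4 * M ^+ 17 * y ^+ 2 - 7 * M ^+ 17 * y ^+ 3 - M ^+ 19 * y ^+ 2).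
Definition W10 (M y : R) : R := (M^-1 ^+ 7 * y ^+ 2 - 2 * M^-1 ^+ 5 * y ^+ 2 + 3 * M^-1 ^+ 5 * y ^+ 3 - M^-1 ^+ 3 * y + 4 * M^-1 ^+ 3 * y ^+ 2 - 4 * M^-1 ^+ 3 * y ^+ 3 + 3 * M^-1 ^+ 3 * y ^+ 4 + 2 * M^-1 * y - 5 * M^-1 * y ^+ 2 + 7 * M^-1 * y ^+ 3 - 2 * M^-1 * y ^+ 4 + M^-1 * y ^+ 5 - M * y + 5 * M * y ^+ 2 - 4 * M * y ^+ 3 + 3 * M * y ^+ 4 + M ^+ 3 * y - 2 * M ^+ 3 * y ^+ 2 + 3 * M ^+ 3 * y ^+ 3 + M ^+ 5 * y ^+ 2).
Definition V10 (M y : R) : R := (M^-1 ^+ 5 * y ^+ 2 + M^-1 ^+ 3 * y - 2 * M^-1 ^+ 3 * y ^+ 2 + 3 * M^-1 ^+ 3 * y ^+ 3 - M^-1 * y + 5 * M^-1 * y ^+ 2 - 4 * M^-1 * y ^+ 3 + 3 * M^-1 * y ^+ 4 + 2 * M * y - 5 * M * y ^+ 2 + 7 * M * y ^+ 3 - 2 * M * y ^+ 4 + M * y ^+ 5 - M ^+ 3 * y + 4 * M ^+ 3 * y ^+ 2 - 4 * M ^+ 3 * y ^+ 3 + 3 * M ^+ 3 * y ^+ 4 - 2 * M ^+ 5 * y ^+ 2 + 3 * M ^+ 5 * y ^+ 3 + M ^+ 7 * y ^+ 2).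
Definition L10 (M y : R) : R := (M^-1 ^+ 19 * y ^+ 3 - 4 * M^-1 ^+ 17 * y ^+ 3 + 7 * M^-1 ^+ 17 * y ^+ 4 - M^-1 ^+ 15 * y ^+ 2 + 11 * M^-1 ^+ 15 * y ^+ 3 - 23 * M^-1 ^+ 15 * y ^+ 4 + 21 * M^-1 ^+ 15 * y ^+ 5 + 5 * M^-1 ^+ 13 * y ^+ 2 - 26 * M^-1 ^+ 13 * y ^+ 3 + 57 * M^-1 ^+ 13 * y ^+ 4 - 54 * M^-1 ^+ 13 * y ^+ 5 + 35 * M^-1 ^+ 13 * y ^+ 6 - 10 * M^-1 ^+ 11 * y ^+ 2 + 50 * M^-1 ^+ 11 * y ^+ 3 - 101 * M^-1 ^+ 11 * y ^+ 4 + 120 * M^-1 ^+ 11 * y ^+ 5 - 65 * M^-1 ^+ 11 * y ^+ 6 + 35 * M^-1 ^+ 11 * y ^+ 7 - M^-1 ^+ 9 * y + 15 * M^-1 ^+ 9 * y ^+ 2 - 64 * M^-1 ^+ 9 * y ^+ 3 + 139 * M^-1 ^+ 9 * y ^+ 4 - 157 * M^-1 ^+ 9 * y ^+ 5 + 130 * M^-1 ^+ 9 * y ^+ 6 - 40 * M^-1 ^+ 9 * y ^+ 7 + 21 * M^-1 ^+ 9 * y ^+ 8 + 2 * M^-1 ^+ 7 * y - 15 * M^-1 ^+ 7 * y ^+ 2 + 61 * M^-1 ^+ 7 * y ^+ 3 - 120 * M^-1 ^+ 7 * y ^+ 4 + 158 * M^-1 ^+ 7 * y ^+ 5 - 103 *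 M^-1 ^+ 7 * y ^+ 6 + 75 * M^-1 ^+ 7 * y ^+ 7 - 9 * M^-1 ^+ 7 * y ^+ 8 + 7 * M^-1 ^+ 7 * y ^+ 9 + 7 * M^-1 ^+ 5 * y ^+ 2 - 23 * M^-1 ^+ 5 * y ^+ 3 + 54 * M^-1 ^+ 5 * y ^+ 4 - 55 * M^-1 ^+ 5 * y ^+ 5 + 65 * M^-1 ^+ 5 * y ^+ 6 - 8 * M^-1 ^+ 5 * y ^+ 7 + 21 * M^-1 ^+ 5 * y ^+ 8 + 2 * M^-1 ^+ 5 * y ^+ 9 + M^-1 ^+ 5 * y ^+ 10 + 7 * M^-1 ^+ 3 * y ^+ 2 - 23 * M^-1 ^+ 3 * y ^+ 3 + 54 * M^-1 ^+ 3 * y ^+ 4 - 55 * M^-1 ^+ 3 * y ^+ 5 + 65 * M^-1 ^+ 3 * y ^+ 6 - 8 * M^-1 ^+ 3 * y ^+ 7 + 21 * M^-1 ^+ 3 * y ^+ 8 + 2 * M^-1 ^+ 3 * y ^+ 9 + M^-1 ^+ 3 * y ^+ 10 + 2 * M^-1 * y - 15 * M^-1 * y ^+ 2 + 61 * M^-1 * y ^+ 3 - 120 * M^-1 * y ^+ 4 + 158 * M^-1 * y ^+ 5 - 103 * M^-1 * y ^+ 6 + 75 * M^-1 * y ^+ 7 - 9 * M^-1 * y ^+ 8 + 7 * M^-1 * y ^+ 9 - M * y + 15 * M * y ^+ 2 - 64 * M * y ^+ 3 + 139 * M * y ^+ 4 - 157 * M * y ^+ 5 + 130 * M * y ^+ 6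 - 40 * M * y ^+ 7 + 21 * M * y ^+ 8 - 10 * M ^+ 3 * y ^+ 2 + 50 * M ^+ 3 * y ^+ 3 - 101 * M ^+ 3 * y ^+ 4 + 120 * M ^+ 3 * y ^+ 5 - 65 * M ^+ 3 * y ^+ 6 + 35 * M ^+ 3 * y ^+ 7 + 5 * M ^+ 5 * y ^+ 2 - 26 * M ^+ 5 * y ^+ 3 + 57 * M ^+ 5 * y ^+ 4 - 54 * M ^+ 5 * y ^+ 5 + 35 * M ^+ 5 * y ^+ 6 - M ^+ 7 * y ^+ 2 + 11 * M ^+ 7 * y ^+ 3 - 23 * M ^+ 7 * y ^+ 4 + 21 * M ^+ 7 * y ^+ 5 - 4 * M ^+ 9 * y ^+ 3 + 7 * M ^+ 9 * y ^+ 4 + M ^+ 11 * y ^+ 3).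
Definition W11 (M y : R) : R := (M^-1 ^+ 8 * y - 2 * M^-1 ^+ 6 * y + 3 * M^-1 ^+ 6 * y ^+ 2 + 3 * M^-1 ^+ 4 * y - 4 * M^-1 ^+ 4 * y ^+ 2 + 3 * M^-1 ^+ 4 * y ^+ 3 + M^-1 ^+ 2 - 2 * M^-1 ^+ 2 * y + 5 * M^-1 ^+ 2 * y ^+ 2 - 2 * M^-1 ^+ 2 * y ^+ 3 + M^-1 ^+ 2 * y ^+ 4 + 2 * y - 2 * y ^+ 2 + 2 * y ^+ 3 + M ^+ 2 * y ^+ 2).
Definition V11 (M y : R) : R := (M^-1 ^+ 8 * y - 2 * M^-1 ^+ 6 * y + 4 * M^-1 ^+ 6 * y ^+ 2 + 3 * M^-1 ^+ 4 * y - 6 * M^-1 ^+ 4 * y ^+ 2 + 6 * M^-1 ^+ 4 * y ^+ 3 + M^-1 ^+ 2 - 4 * M^-1 ^+ 2 * y + 9 * M^-1 ^+ 2 * y ^+ 2 - 6 * M^-1 ^+ 2 * y ^+ 3 + 4 * M^-1 ^+ 2 * y ^+ 4 + 3 * y - 8 * y ^+ 2 + 9 * y ^+ 3 - 2 * y ^+ 4 + y ^+ 5 - 2 * M ^+ 2 * y + 5 * M ^+ 2 * y ^+ 2 - 4 * M ^+ 2 * y ^+ 3 + 3 * M ^+ 2 * y ^+ 4 - 2 * M ^+ 4 * y ^+ 2 + 3 * M ^+ 4 * y ^+ 3 + M ^+ 6 * y ^+ 2).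
Definition L11 (M y : R) : R := (- M^-1 ^+ 18 * y ^+ 3 + 3 * M^-1 ^+ 16 * y ^+ 3 - 7 * M^-1 ^+ 16 * y ^+ 4 + M^-1 ^+ 14 * y ^+ 2 - 8 * M^-1 ^+ 14 * y ^+ 3 + 16 * M^-1 ^+ 14 * y ^+ 4 - 21 * M^-1 ^+ 14 * y ^+ 5 - 3 * M^-1 ^+ 12 * y ^+ 2 + 18 * M^-1 ^+ 12 * y ^+ 3 - 41 * M^-1 ^+ 12 * y ^+ 4 + 33 * M^-1 ^+ 12 * y ^+ 5 - 35 * M^-1 ^+ 12 * y ^+ 6 + 2 * M^-1 ^+ 10 * y ^+ 2 - 24 * M^-1 ^+ 10 * y ^+ 3 + 60 * M^-1 ^+ 10 * y ^+ 4 - 87 * M^-1 ^+ 10 * y ^+ 5 + 30 * M^-1 ^+ 10 * y ^+ 6 - 35 * M^-1 ^+ 10 * y ^+ 7 + M^-1 ^+ 8 * y + M^-1 ^+ 8 * y ^+ 2 + 6 * M^-1 ^+ 8 * y ^+ 3 - 51 * M^-1 ^+ 8 * y ^+ 4 + 70 * M^-1 ^+ 8 * y ^+ 5 - 100 * M^-1 ^+ 8 * y ^+ 6 + 5 * M^-1 ^+ 8 * y ^+ 7 - 21 * M^-1 ^+ 8 * y ^+ 8 + M^-1 ^+ 6 * y - 12 * M^-1 ^+ 6 * y ^+ 2 + 30 * M^-1 ^+ 6 * y ^+ 3 - 29 * M^-1 ^+ 6 * y ^+ 4 - 32 * M^-1 ^+ 6 * y ^+ 5 + 3 * M^-1 ^+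 6 * y ^+ 6 - 70 * M^-1 ^+ 6 * y ^+ 7 - 12 * M^-1 ^+ 6 * y ^+ 8 - 7 * M^-1 ^+ 6 * y ^+ 9 - 5 * M^-1 ^+ 4 * y + 32 * M^-1 ^+ 4 * y ^+ 2 - 96 * M^-1 ^+ 4 * y ^+ 3 + 133 * M^-1 ^+ 4 * y ^+ 4 - 131 * M^-1 ^+ 4 * y ^+ 5 + 8 * M^-1 ^+ 4 * y ^+ 6 - 62 * M^-1 ^+ 4 * y ^+ 7 - 33 * M^-1 ^+ 4 * y ^+ 8 - 9 * M^-1 ^+ 4 * y ^+ 9 - M^-1 ^+ 4 * y ^+ 10 + 4 * M^-1 ^+ 2 * y - 42 * M^-1 ^+ 2 * y ^+ 2 + 133 * M^-1 ^+ 2 * y ^+ 3 - 239 * M^-1 ^+ 2 * y ^+ 4 + 219 * M^-1 ^+ 2 * y ^+ 5 - 197 * M^-1 ^+ 2 * y ^+ 6 + 2 * M^-1 ^+ 2 * y ^+ 7 - 54 * M^-1 ^+ 2 * y ^+ 8 - 11 * M^-1 ^+ 2 * y ^+ 9 - 2 * M^-1 ^+ 2 * y ^+ 10 + 1 - 7 * y + 33 * y ^+ 2 - 120 * y ^+ 3 + 220 * y ^+ 4 - 274 * y ^+ 5 + 136 * y ^+ 6 - 143 * y ^+ 7 - 17 * y ^+ 8 - 18 * y ^+ 9 - 2 * y ^+ 10 - M ^+ 2 * y - 6 * M ^+ 2 * y ^+ 2 + 41 * M ^+ 2 * y ^+ 3 - 116 * M ^+ 2 * y ^+ 4 + 129 *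 M ^+ 2 * y ^+ 5 - 154 * M ^+ 2 * y ^+ 6 - 4 * M ^+ 2 * y ^+ 7 - 52 * M ^+ 2 * y ^+ 8 - 10 * M ^+ 2 * y ^+ 9 - 2 * M ^+ 2 * y ^+ 10 + 4 * M ^+ 4 * y - 23 * M ^+ 4 * y ^+ 2 + 44 * M ^+ 4 * y ^+ 3 - 49 * M ^+ 4 * y ^+ 4 + 11 * M ^+ 4 * y ^+ 5 - 48 * M ^+ 4 * y ^+ 6 - 42 * M ^+ 4 * y ^+ 7 - 32 * M ^+ 4 * y ^+ 8 - 8 * M ^+ 4 * y ^+ 9 - M ^+ 4 * y ^+ 10 - 6 * M ^+ 6 * y + 37 * M ^+ 6 * y ^+ 2 - 101 * M ^+ 6 * y ^+ 3 + 146 * M ^+ 6 * y ^+ 4 - 154 * M ^+ 6 * y ^+ 5 + 64 * M ^+ 6 * y ^+ 6 - 80 * M ^+ 6 * y ^+ 7 - 6 * M ^+ 6 * y ^+ 8 - 7 * M ^+ 6 * y ^+ 9 + 4 * M ^+ 8 * y - 32 * M ^+ 8 * y ^+ 2 + 97 * M ^+ 8 * y ^+ 3 - 162 * M ^+ 8 * y ^+ 4 + 154 * M ^+ 8 * y ^+ 5 - 130 * M ^+ 8 * y ^+ 6 + 20 * M ^+ 8 * y ^+ 7 - 21 * M ^+ 8 * y ^+ 8 - M ^+ 10 * y + 18 * M ^+ 10 * y ^+ 2 - 67 * M ^+ 10 * y ^+ 3 + 116 * M ^+ 10 * y ^+ 4 - 122 * M ^+ 10 * y ^+ 5 + 50 *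 M ^+ 10 * y ^+ 6 - 35 * M ^+ 10 * y ^+ 7 - 8 * M ^+ 12 * y ^+ 2 + 34 * M ^+ 12 * y ^+ 3 - 60 * M ^+ 12 * y ^+ 4 + 48 * M ^+ 12 * y ^+ 5 - 35 * M ^+ 12 * y ^+ 6 + 2 * M ^+ 14 * y ^+ 2 - 12 * M ^+ 14 * y ^+ 3 + 22 * M ^+ 14 * y ^+ 4 - 21 * M ^+ 14 * y ^+ 5 + 4 * M ^+ 16 * y ^+ 3 - 7 * M ^+ 16 * y ^+ 4 - M ^+ 18 * y ^+ 3).
Definition Pp (M y : R) : R := (M^-1 ^+ 8 * y - 3 * M^-1 ^+ 6 * y + 4 * M^-1 ^+ 6 * y ^+ 2 - M^-1 ^+ 4 + 6 * M^-1 ^+ 4 * y - 9 * M^-1 ^+ 4 * y ^+ 2 + 6 * M^-1 ^+ 4 * y ^+ 3 + 3 * M^-1 ^+ 2 - 11 * M^-1 ^+ 2 * y + 16 * M^-1 ^+ 2 * y ^+ 2 - 9 * M^-1 ^+ 2 * y ^+ 3 + 4 * M^-1 ^+ 2 * y ^+ 4 - 3 + 13 * y - 19 * y ^+ 2 + 14 * y ^+ 3 - 3 * y ^+ 4 + y ^+ 5 + 3 * M ^+ 2 - 11 * M ^+ 2 * y + 16 * M ^+ 2 * y ^+ 2 - 9 * M ^+ 2 * y ^+ 3 + 4 * M ^+ 2 * y ^+ 4 - M ^+ 4 + 6 * M ^+ 4 * y - 9 * M ^+ 4 * y ^+ 2 + 6 * M ^+ 4 * y ^+ 3 - 3 * M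 ^+ 6 * y + 4 * M ^+ 6 * y ^+ 2 + M ^+ 8 * y).
Definition K2 (M y : R) : R := (M^-1 ^+ 11 * y ^+ 2 - M^-1 ^+ 9 * y ^+ 2 + 3 * M^-1 ^+ 9 * y ^+ 3 + 2 * M^-1 ^+ 7 * y ^+ 2 - M^-1 ^+ 7 * y ^+ 3 + 3 * M^-1 ^+ 7 * y ^+ 4 + M^-1 ^+ 5 * y + 3 * M^-1 ^+ 5 * y ^+ 3 + M^-1 ^+ 5 * y ^+ 4 + M^-1 ^+ 5 * y ^+ 5 + M^-1 ^+ 3 * y + 3 * M^-1 ^+ 3 * y ^+ 3 + M^-1 ^+ 3 * y ^+ 4 + M^-1 ^+ 3 * y ^+ 5 + 2 * M^-1 * y ^+ 2 - M^-1 * y ^+ 3 + 3 * M^-1 * y ^+ 4 - M * y ^+ 2 + 3 * M * y ^+ 3 + M ^+ 3 * y ^+ 2).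
Definition K4 (M y : R) : R := (- M^-1 ^+ 10 * y ^+ 2 - 3 * M^-1 ^+ 8 * y ^+ 3 - 2 * M^-1 ^+ 6 * y ^+ 2 - 2 * M^-1 ^+ 6 * y ^+ 3 - 3 * M^-1 ^+ 6 * y ^+ 4 - 2 * M^-1 ^+ 4 * y ^+ 2 - 5 * M^-1 ^+ 4 * y ^+ 3 - 4 * M^-1 ^+ 4 * y ^+ 4 - M^-1 ^+ 4 * y ^+ 5 - 4 * M^-1 ^+ 2 * y + 2 * M^-1 ^+ 2 * y ^+ 2 - 8 * M^-1 ^+ 2 * y ^+ 3 - 5 * M^-1 ^+ 2 * y ^+ 4 - 2 * M^-1 ^+ 2 * y ^+ 5 + y - 8 * y ^+ 2 - y ^+ 3 - 8 * y ^+ 4 - 2 * y ^+ 5 + M ^+ 2 - 4 * M ^+ 2 * y + 3 * M ^+ 2 * y ^+ 2 - 10 * M ^+ 2 * y ^+ 3 - 4 * M ^+ 2 * y ^+ 4 - 2 * M ^+ 2 * y ^+ 5 - M ^+ 4 * y - 2 * M ^+ 4 * y ^+ 2 - 5 * M ^+ 4 * y ^+ 3 - 4 * M ^+ 4 * y ^+ 4 - M ^+ 4 * y ^+ 5 - M ^+ 6 + 2 * M ^+ 6 * y - 6 * M ^+ 6 * y ^+ 2 - 4 * M ^+ 6 * y ^+ 4 - 3 * M ^+ 8 * y + 4 * M ^+ 8 * y ^+ 2 - 6 * M ^+ 8 * y ^+ 3 + 2 * M ^+ 10 * y - 4 * M ^+ 10 * y ^+ 2 - M ^+ 12 * y).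
Definition K5 (M y : R) : R := (- M^-1 ^+ 28 * y ^+ 2 + 6 * M^-1 ^+ 26 * y ^+ 2 - 12 * M^-1 ^+ 26 * y ^+ 3 - 23 * M^-1 ^+ 24 * y ^+ 2 + 64 * M^-1 ^+ 24 * y ^+ 3 - 66 * M^-1 ^+ 24 * y ^+ 4 + 66 * M^-1 ^+ 22 * y ^+ 2 - 230 * M^-1 ^+ 22 * y ^+ 3 + 308 * M^-1 ^+ 22 * y ^+ 4 - 220 * M^-1 ^+ 22 * y ^+ 5 - 3 * M^-1 ^+ 20 * y - 148 * M^-1 ^+ 20 * y ^+ 2 + 610 * M^-1 ^+ 20 * y ^+ 3 - (1 * 1000 + 37) * M^-1 ^+ 20 * y ^+ 4 + 880 * M^-1 ^+ 20 * y ^+ 5 - 495 * M^-1 ^+ 20 * y ^+ 6 + M^-1 ^+ 18 + 17 * M^-1 ^+ 18 * y + 242 * M^-1 ^+ 18 * y ^+ 2 - (1 * 1000 + 260) * M^-1 ^+ 18 * y ^+ 3 + (2 * 1000 + 506) * M^-1 ^+ 18 * y ^+ 4 - (2 * 1000 + 780) * M^-1 ^+ 18 * y ^+ 5 + (1 * 1000 + 650) * M^-1 ^+ 18 * y ^+ 6 - 792 * M^-1 ^+ 18 * y ^+ 7 - 5 * M^-1 ^+ 16 - 48 * M^-1 ^+ 16 * y - 257 * M^-1 ^+ 16 * y ^+ 2 + (1 * 1000 + 974) * M^-1 ^+ 16 * y ^+ 3 - (4 * 1000 + 718) * M^-1 ^+ 16 * y ^+ 4 + (5 * 1000 + 992)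 * M^-1 ^+ 16 * y ^+ 5 - (4 * 1000 + 920) * M^-1 ^+ 16 * y ^+ 6 + (2 * 1000 + 112) * M^-1 ^+ 16 * y ^+ 7 - 924 * M^-1 ^+ 16 * y ^+ 8 + 15 * M^-1 ^+ 14 + 107 * M^-1 ^+ 14 * y + 48 * M^-1 ^+ 14 * y ^+ 2 - (2 * 1000 + 200) * M^-1 ^+ 14 * y ^+ 3 + (6 * 1000 + 670) * M^-1 ^+ 14 * y ^+ 4 - (10 * 1000 + 155) * M^-1 ^+ 14 * y ^+ 5 + (9 * 1000 + 138) * M^-1 ^+ 14 * y ^+ 6 - (6 * 1000 + 36) * M^-1 ^+ 14 * y ^+ 7 + (1 * 1000 + 848) * M^-1 ^+ 14 * y ^+ 8 - 792 * M^-1 ^+ 14 * y ^+ 9 - 34 * M^-1 ^+ 12 - 189 * M^-1 ^+ 12 * y + 580 * M^-1 ^+ 12 * y ^+ 2 + (1 * 1000 + 100) * M^-1 ^+ 12 * y ^+ 3 - (6 * 1000 + 518) * M^-1 ^+ 12 * y ^+ 4 + (12 * 1000 + 303) * M^-1 ^+ 12 * y ^+ 5 - (13 * 1000 + 753) * M^-1 ^+ 12 * y ^+ 6 + (9 * 1000 + 84) * M^-1 ^+ 12 * y ^+ 7 - (5 * 1000 + 250) * M^-1 ^+ 12 * y ^+ 8 + (1 * 1000 + 56) * M^-1 ^+ 12 * y ^+ 9 - 495 * M^-1 ^+ 12 * y ^+ 10 + 59 * M^-1 ^+ 10 + 280 * M^-1 ^+ 10 * y - (1 * 1000 + 663) *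 M^-1 ^+ 10 * y ^+ 2 + (2 * 1000 + 93) * M^-1 ^+ 10 * y ^+ 3 + (1 * 1000 + 997) * M^-1 ^+ 10 * y ^+ 4 - (9 * 1000 + 210) * M^-1 ^+ 10 * y ^+ 5 + (12 * 1000 + 956) * M^-1 ^+ 10 * y ^+ 6 - (12 * 1000 + 20) * M^-1 ^+ 10 * y ^+ 7 + (5 * 1000 + 628) * M^-1 ^+ 10 * y ^+ 8 - (3 * 1000 + 264) * M^-1 ^+ 10 * y ^+ 9 + 330 * M^-1 ^+ 10 * y ^+ 10 - 220 * M^-1 ^+ 10 * y ^+ 11 - 84 * M^-1 ^+ 8 - 373 * M^-1 ^+ 8 * y + (3 * 1000 + 81) * M^-1 ^+ 8 * y ^+ 2 - (7 * 1000 + 229) * M^-1 ^+ 8 * y ^+ 3 + (7 * 1000 + 812) * M^-1 ^+ 8 * y ^+ 4 - (2 * 1000 + 328) * M^-1 ^+ 8 * y ^+ 5 - (4 * 1000 + 954) * M^-1 ^+ 8 * y ^+ 6 + (6 * 1000 + 524) * M^-1 ^+ 8 * y ^+ 7 - (6 * 1000 + 664) * M^-1 ^+ 8 * y ^+ 8 + (1 * 1000 + 704) * M^-1 ^+ 8 * y ^+ 9 - (1 * 1000 + 455) * M^-1 ^+ 8 * y ^+ 10 - 66 * M^-1 ^+ 8 * y ^+ 12 + 100 * M^-1 ^+ 6 + 428 * M^-1 ^+ 6 * y - (4 * 1000 + 444) * M^-1 ^+ 6 * y ^+ 2 + (13 * 1000 + 179) * M^-1 ^+ 6 * y ^+ 3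 - (20 * 1000 + 978) * M^-1 ^+ 6 * y ^+ 4 + (20 * 1000 + 558) * M^-1 ^+ 6 * y ^+ 5 - (12 * 1000 + 944) * M^-1 ^+ 6 * y ^+ 6 + (3 * 1000 + 248) * M^-1 ^+ 6 * y ^+ 7 - (1 * 1000 + 116) * M^-1 ^+ 6 * y ^+ 8 - (2 * 1000 + 234) * M^-1 ^+ 6 * y ^+ 9 - 258 * M^-1 ^+ 6 * y ^+ 10 - 470 * M^-1 ^+ 6 * y ^+ 11 - 44 * M^-1 ^+ 6 * y ^+ 12 - 12 * M^-1 ^+ 6 * y ^+ 13 - 101 * M^-1 ^+ 4 - 425 * M^-1 ^+ 4 * y + (5 * 1000 + 182) * M^-1 ^+ 4 * y ^+ 2 - (17 * 1000 + 628) * M^-1 ^+ 4 * y ^+ 3 + (32 * 1000 + 931) * M^-1 ^+ 4 * y ^+ 4 - (39 * 1000 + 658) * M^-1 ^+ 4 * y ^+ 5 + (32 * 1000 + 632) * M^-1 ^+ 4 * y ^+ 6 - (20 * 1000 + 480) * M^-1 ^+ 4 * y ^+ 7 + (6 * 1000 + 828) * M^-1 ^+ 4 * y ^+ 8 - (3 * 1000 + 965) * M^-1 ^+ 4 * y ^+ 9 - 490 * M^-1 ^+ 4 * y ^+ 10 - 462 * M^-1 ^+ 4 * y ^+ 11 - 113 * M^-1 ^+ 4 * y ^+ 12 - 16 * M^-1 ^+ 4 * y ^+ 13 - M^-1 ^+ 4 * y ^+ 14 + 89 * M^-1 ^+ 2 + 322 * M^-1 ^+ 2 * y - (4 * 1000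 + 855) * M^-1 ^+ 2 * y ^+ 2 + (18 * 1000 + 391) * M^-1 ^+ 2 * y ^+ 3 - (37 * 1000 + 851) * M^-1 ^+ 2 * y ^+ 4 + (50 * 1000 + 371) * M^-1 ^+ 2 * y ^+ 5 - (47 * 1000 + 134) * M^-1 ^+ 2 * y ^+ 6 + (30 * 1000 + 594) * M^-1 ^+ 2 * y ^+ 7 - (17 * 1000 + 325) * M^-1 ^+ 2 * y ^+ 8 + (4 * 1000 + 237) * M^-1 ^+ 2 * y ^+ 9 - (2 * 1000 + 702) * M^-1 ^+ 2 * y ^+ 10 - 168 * M^-1 ^+ 2 * y ^+ 11 - 182 * M^-1 ^+ 2 * y ^+ 12 - 20 * M^-1 ^+ 2 * y ^+ 13 - 2 * M^-1 ^+ 2 * y ^+ 14 - 69 - 113 * y + (3 * 1000 + 270) * y ^+ 2 - (14 * 1000 + 330) * y ^+ 3 + (32 * 1000 + 446) * y ^+ 4 - (46 * 1000 + 496) * y ^+ 5 + (45 * 1000 + 685) * y ^+ 6 - (33 * 1000 + 898) * y ^+ 7 + (15 * 1000 + 883) * y ^+ 8 - (8 * 1000 + 568) * y ^+ 9 + 915 * y ^+ 10 - 946 * y ^+ 11 - 82 * y ^+ 12 - 32 * y ^+ 13 - 2 * y ^+ 14 + 45 * M ^+ 2 - 164 * M ^+ 2 * y - 815 * M ^+ 2 * y ^+ 2 + (6 * 1000 + 343) * M ^+ 2 * y ^+ 3 - (17 * 1000 + 506) * M ^+ 2 * y ^+ 4 + (27 * 1000 + 916) * M ^+ 2 * y ^+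 5 - (29 * 1000 + 843) * M ^+ 2 * y ^+ 6 + (21 * 1000 + 101) * M ^+ 2 * y ^+ 7 - (13 * 1000 + 469) * M ^+ 2 * y ^+ 8 + (3 * 1000 + 207) * M ^+ 2 * y ^+ 9 - (2 * 1000 + 464) * M ^+ 2 * y ^+ 10 - 176 * M ^+ 2 * y ^+ 11 - 178 * M ^+ 2 * y ^+ 12 - 19 * M ^+ 2 * y ^+ 13 - 2 * M ^+ 2 * y ^+ 14 - 24 * M ^+ 4 + 434 * M ^+ 4 * y - (1 * 1000 + 848) * M ^+ 4 * y ^+ 2 + (3 * 1000 + 47) * M ^+ 4 * y ^+ 3 - (1 * 1000 + 568) * M ^+ 4 * y ^+ 4 - (2 * 1000 + 83) * M ^+ 4 * y ^+ 5 + (4 * 1000 + 183) * M ^+ 4 * y ^+ 6 - (4 * 1000 + 904) * M ^+ 4 * y ^+ 7 + 819 * M ^+ 4 * y ^+ 8 - (2 * 1000 + 153) * M ^+ 4 * y ^+ 9 - 772 * M ^+ 4 * y ^+ 10 - 396 * M ^+ 4 * y ^+ 11 - 110 * M ^+ 4 * y ^+ 12 - 15 * M ^+ 4 * y ^+ 13 - M ^+ 4 * y ^+ 14 + 8 * M ^+ 6 - 626 * M ^+ 6 * y + (3 * 1000 + 889) * M ^+ 6 * y ^+ 2 - (10 * 1000 + 798) * M ^+ 6 * y ^+ 3 + (18 * 1000 + 144) * M ^+ 6 * y ^+ 4 - (21 * 1000 + 105) * M ^+ 6 * y ^+ 5 + (17 * 1000 + 973) * M ^+ 6 * y ^+ 6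 - (13 * 1000 + 33) * M ^+ 6 * y ^+ 7 + (5 * 1000 + 312) * M ^+ 6 * y ^+ 8 - (3 * 1000 + 879) * M ^+ 6 * y ^+ 9 + 157 * M ^+ 6 * y ^+ 10 - 495 * M ^+ 6 * y ^+ 11 - 33 * M ^+ 6 * y ^+ 12 - 12 * M ^+ 6 * y ^+ 13 + M ^+ 8 + 685 * M ^+ 8 * y - (4 * 1000 + 860) * M ^+ 8 * y ^+ 2 + (14 * 1000 + 876) * M ^+ 8 * y ^+ 3 - (27 * 1000 + 213) * M ^+ 8 * y ^+ 4 + (33 * 1000 + 818) * M ^+ 8 * y ^+ 5 - (30 * 1000 + 729) * M ^+ 8 * y ^+ 6 + (19 * 1000 + 852) * M ^+ 8 * y ^+ 7 - (11 * 1000 + 424) * M ^+ 8 * y ^+ 8 + (3 * 1000 + 129) * M ^+ 8 * y ^+ 9 - (1 * 1000 + 650) * M ^+ 8 * y ^+ 10 + 55 * M ^+ 8 * y ^+ 11 - 66 * M ^+ 8 * y ^+ 12 - 3 * M ^+ 10 - 626 * M ^+ 10 * y + (4 * 1000 + 691) * M ^+ 10 * y ^+ 2 - (14 * 1000 + 907) * M ^+ 10 * y ^+ 3 + (27 * 1000 + 857) * M ^+ 10 * y ^+ 4 - (34 * 1000 + 755) * M ^+ 10 * y ^+ 5 + (30 * 1000 + 476) * M ^+ 10 * y ^+ 6 - (20 * 1000 + 364) * M ^+ 10 * y ^+ 7 + (8 * 1000 + 688) * M ^+ 10 * y ^+ 8 - (3 * 1000 + 894) * M ^+ 10 * y ^+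 9 + 495 * M ^+ 10 * y ^+ 10 - 220 * M ^+ 10 * y ^+ 11 + 2 * M ^+ 12 + 478 * M ^+ 12 * y - (3 * 1000 + 753) * M ^+ 12 * y ^+ 2 + (12 * 1000 + 106) * M ^+ 12 * y ^+ 3 - (22 * 1000 + 478) * M ^+ 12 * y ^+ 4 + (27 * 1000 + 286) * M ^+ 12 * y ^+ 5 - (23 * 1000 + 253) * M ^+ 12 * y ^+ 6 + (13 * 1000 + 452) * M ^+ 12 * y ^+ 7 - (6 * 1000 + 468) * M ^+ 12 * y ^+ 8 + (1 * 1000 + 386) * M ^+ 12 * y ^+ 9 - 495 * M ^+ 12 * y ^+ 10 - M ^+ 14 - 312 * M ^+ 14 * y + (2 * 1000 + 545) * M ^+ 14 * y ^+ 2 - (8 * 1000 + 219) * M ^+ 14 * y ^+ 3 + (14 * 1000 + 902) * M ^+ 14 * y ^+ 4 - (17 * 1000 + 302) * M ^+ 14 * y ^+ 5 + (13 * 1000 + 380) * M ^+ 14 * y ^+ 6 - (7 * 1000 + 590) * M ^+ 14 * y ^+ 7 + (2 * 1000 + 310) * M ^+ 14 * y ^+ 8 - 792 * M ^+ 14 * y ^+ 9 + 170 * M ^+ 16 * y - (1 * 1000 + 470) * M ^+ 16 * y ^+ 2 + (4 * 1000 + 718) * M ^+ 16 * y ^+ 3 - (8 * 1000 + 198) * M ^+ 16 * y ^+ 4 + (8 * 1000 + 782) * M ^+ 16 * y ^+ 5 - (6 * 1000 + 270) * M ^+ 16 * y ^+ 6 + (2 * 1000 + 574) * M ^+ 16 *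 y ^+ 7 - 924 * M ^+ 16 * y ^+ 8 - 76 * M ^+ 18 * y + 724 * M ^+ 18 * y ^+ 2 - (2 * 1000 + 284) * M ^+ 18 * y ^+ 3 + (3 * 1000 + 706) * M ^+ 18 * y ^+ 4 - (3 * 1000 + 575) * M ^+ 18 * y ^+ 5 + (1 * 1000 + 980) * M ^+ 18 * y ^+ 6 - 792 * M ^+ 18 * y ^+ 7 + 27 * M ^+ 20 * y - 302 * M ^+ 20 * y ^+ 2 + 920 * M ^+ 20 * y ^+ 3 - (1 * 1000 + 342) * M ^+ 20 * y ^+ 4 + (1 * 1000 + 45) * M ^+ 20 * y ^+ 5 - 495 * M ^+ 20 * y ^+ 6 - 7 * M ^+ 22 * y + 105 * M ^+ 22 * y ^+ 2 - 299 * M ^+ 22 * y ^+ 3 + 363 * M ^+ 22 * y ^+ 4 - 220 * M ^+ 22 * y ^+ 5 + M ^+ 24 * y - 30 * M ^+ 24 * y ^+ 2 + 75 * M ^+ 24 * y ^+ 3 - 66 * M ^+ 24 * y ^+ 4 + 7 * M ^+ 26 * y ^+ 2 - 12 * M ^+ 26 * y ^+ 3 - M ^+ 28 * y ^+ 2).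
Definition a2N (z : R) : R := - 1 + 6 * z - 13 * z ^+ 2 + 15 * z ^+ 3 - 7 * z ^+ 4 - 7 * z ^+ 5 + 12 * z ^+ 6 - 6 * z ^+ 7 + z ^+ 8.
Definition bN (z : R) : R := - 1 + 8 * z - 24 * z ^+ 2 + 38 * z ^+ 3 - 38 * z ^+ 4 + 12 * z ^+ 5 + 24 * z ^+ 6 - 38 * z ^+ 7 + 25 * z ^+ 8 - 8 * z ^+ 9 + z ^+ 10.
Definition Am (M : R) := mx2 M 1 0 M^-1.
Definition Bm (M y : R) := mx2 M 0 y M^-1.

Lemma Am_inv M : M != 0 -> (Am M)^-1 = mx2 M^-1 (-1) 0 M.
Proof. move=> HM; rewrite /Am mx2_inv ?oppr0 //. by rewrite mulrV ?unitfE // mulr0 subr0. Qed.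
Lemma Bm_inv M y : M != 0 -> (Bm M y)^-1 = mx2 M^-1 0 (-y) M.
Proof. move=> HM; rewrite /Bm mx2_inv ?oppr0 //. by rewrite mulrV ?unitfE // mul0r subr0. Qed.

Lemma W_eq M y : M != 0 ->
  tb_w 11 3 (Am M) (Bm M y) = mx2 (W00 M y) (W01 M y) (W10 M y) (W11 M y).
Proof.
move=> HM; rewrite tbw_eq Am_inv // Bm_inv // /Am /Bm !mx2_mul.
apply: mx2_inj; rewrite /W00 /W01 /W10 /W11; field; exact: HM.
Qed.
Lemma V_eq M y : M != 0 ->
  tb_wrev 11 3 (Am M) (Bm M y) = mx2 (V00 M y) (V01 M y) (V10 M y) (V11 M y).
Proof.
move=> HM; rewrite tbwrev_eq Am_inv // Bm_inv // /Am /Bm !mx2_mul.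
apply: mx2_inj; rewrite /V00 /V01 /V10 /V11; field; exact: HM.
Qed.
Lemma L_eq M y : M != 0 ->
  tb_longitude 11 3 (Am M) (Bm M y) = mx2 (L00 M y) (L01 M y) (L10 M y) (L11 M y).
Proof.
move=> HM; rewrite tblong_eq V_eq // W_eq // Am_inv // !mx2_mul.
apply: mx2_inj; rewrite /L00 /L01 /L10 /L11 /V00 /V01 /V10 /V11 /W00 /W01 /W10 /W11; field; exact: HM.
Qed.
Definition Zof (M y : R) := M ^+ 2 + M^-1 ^+ 2 + y.

Lemma Pp_eq M y : M != 0 ->
  Pp M y = - ((Zof M y) ^+ 2 - 3 * Zof M y + 1)
           + y * (Zof M y) ^+ 2 * (Zof M y - 1) * (Zof M y - 2).
Proof. move=> HM; rewrite /Pp /Zof; field; exact: HM. Qed.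

Lemma R3 M y : M != 0 -> L10 M y = K2 M y * Pp M y.
Proof. move=> HM; rewrite /L10 /K2 /Pp; field; exact: HM. Qed.

Lemma R4 M y : M != 0 ->
  M * L01 M y + L11 M y - (L00 M y + M^-1 * L01 M y) = K4 M y * Pp M y.
Proof. move=> HM; rewrite /L00 /L01 /L11 /K4 /Pp; field; exact: HM. Qed.

Lemma R5 M y : M != 0 ->
  L11 M y * (Zof M y) ^+ 6 * (Zof M y - 2) ^+ 3
  - (a2N (Zof M y) * (Zof M y) ^+ 2 * (Zof M y - 2) - bN (Zof M y) * M ^+ 2)
  = K5 M y * Pp M y.
Proof. move=> HM; rewrite /L11 /K5 /Pp /a2N /bN /Zof; field; exact: HM. Qed.

Lemma R6 M y : M != 0 -> L00 M y * L11 M y - L01 M y * L10 M y = 1.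
Proof. move=> HM; rewrite /L00 /L01 /L10 /L11; field; exact: HM. Qed.

Lemma R7 M : M != 0 -> L11 M 0 = 1.
Proof. move=> HM; rewrite /L11; field; exact: HM. Qed.
Lemma mx2_unit a b c d : a * d - b * c != 0 -> mx2 a b c d \is a GRing.unit.
Proof.
move=> H; apply/unitrP; exists (mx2 (d / (a*d-b*c)) (-b/(a*d-b*c)) (-c/(a*d-b*c)) (a/(a*d-b*c))).
rewrite !mx2_mul mx2_1; split; apply: mx2_inj; field; exact: H.
Qed.

Lemma conj_pow (X Y S : 'M[R]_2) k : X * S = S * Y -> X ^+ k * S = S * Y ^+ k.
Proof.
move=> H; elim: k => [|k IH]; first by rewrite !expr0 mul1r mulr1.
by rewrite exprS -mulrA IH mulrA H -mulrA -exprS.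
Qed.

Lemma diag_pow a d k : (mx2 a 0 0 d) ^+ k = mx2 (a ^+ k) 0 0 (d ^+ k).
Proof.
elim: k => [|k IH]; first by rewrite !expr0 mx2_1.
rewrite exprS IH mx2_mul !exprS; apply: mx2_inj; ring.
Qed.

Lemma sub0_eq (a b c : R) : a - b = c -> c = 0 -> a = b.
Proof. by move=> H Hc; apply/eqP; rewrite -subr_eq0 H Hc. Qed.

Lemma rel_ok M y : M != 0 -> Pp M y = 0 ->
  tb_w 11 3 (Am M) (Bm M y) * Am M = Bm M y * tb_w 11 3 (Am M) (Bm M y).
Proof.
move=> HM HP; rewrite W_eq // /Am /Bm !mx2_mul; apply: mx2_inj.
- by rewrite mulr0 mul0r !addr0 mulrC.
- apply: (@sub0_eq _ _ (Pp M y)) => //.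
  rewrite /W00 /W01 /W11 /Pp; field; rewrite ?HM //.
- apply: (@sub0_eq _ _ (- y * Pp M y)); last by rewrite HP mulr0.
  rewrite /W00 /W10 /Pp; field; rewrite ?HM //.
- apply: (@sub0_eq _ _ 0) => //.
  rewrite /W01 /W10 /W11; field; rewrite ?HM //.
Qed.

Lemma pow_ok M y (m n : nat) : M != 0 -> M ^+ 2 != 1 -> Pp M y = 0 ->
  M ^+ m * (L00 M y) ^+ n = 1 ->
  (Am M) ^+ m * (tb_longitude 11 3 (Am M) (Bm M y)) ^+ n = 1.
Proof.
move=> HM HM2 HP Hmn.
rewrite L_eq // (R3 M y HM) HP mulr0.
have H6 := R6 M y HM; rewrite (R3 M y HM) HP mulr0 mulr0 subr0 in H6.
have H4 := R4 M y HM; rewrite HP mulr0 in H4.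
have HMi : M^-1 - M != 0.
  apply/eqP => E; move/eqP: HM2; apply.
  have : M^-1 = M by apply/eqP; rewrite -subr_eq0 E.
  by move=> E2; rewrite expr2 -{1}E2 mulVf.
set S := mx2 1 1 0 (M^-1 - M).
have HS : S \is a GRing.unit.
  by apply: mx2_unit; rewrite mulr0 subr0 mul1r.
have HA : Am M * S = S * mx2 M 0 0 M^-1.
  rewrite /Am /S !mx2_mul; apply: mx2_inj; field; rewrite ?HM //.
have HL : mx2 (L00 M y) (L01 M y) 0 (L11 M y) * S = S * mx2 (L00 M y) 0 0 (L11 M y).
  rewrite /S !mx2_mul; apply: mx2_inj; try ring.
  have -> : L11 M y = L00 M y - L01 M y * (M - M^-1).
    apply/eqP; rewrite -subr_eq0; apply/eqP; rewrite -H4; ring.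
  ring.
have H := @conj_pow _ _ _ m HA; have H' := @conj_pow _ _ _ n HL.
have : (Am M) ^+ m * (mx2 (L00 M y) (L01 M y) 0 (L11 M y)) ^+ n * S = S.
  rewrite -mulrA H' mulrA H -mulrA !diag_pow mx2_mul.
  suff -> : mx2 (M ^+ m * L00 M y ^+ n + 0 * 0) (M ^+ m * 0 + 0 * L11 M y ^+ n)
     (0 * L00 M y ^+ n + M^-1 ^+ m * 0) (0 * 0 + M^-1 ^+ m * L11 M y ^+ n) = 1 by rewrite mulr1.
  rewrite mx2_1; apply: mx2_inj; rewrite ?mulr0 ?mul0r ?addr0 ?add0r //.
  have E1 : (M ^+ m * L00 M y ^+ n) * (M^-1 ^+ m * L11 M y ^+ n) = 1.
    by rewrite mulrACA -exprMn mulfV // expr1n mul1r -exprMn H6 expr1n.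
  by move: E1; rewrite Hmn mul1r.
by move=> E; rewrite -[LHS]mulr1 -(mulrV HS) mulrA E.
Qed.

Lemma nonab M y : M != 0 -> M ^+ 2 != 1 -> Am M * Bm M y != Bm M y * Am M.
Proof.
move=> HM HM2; apply/eqP; rewrite /Am /Bm !mx2_mul; apply: mx2_neq01.
rewrite mulr0 add0r mul1r mulr1 mul0r addr0 => E.
by move/eqP: HM2; apply; rewrite expr2 -{1}E mulVf.
Qed.
From Stdlib Require Import Reals Lra Psatz Ranalysis5.
From Coquelicot Require Import Coquelicot.
Ltac slra := Lra.lra.
Ltac snra := Lra.nra.
Ltac sfield := field.
Ltac sring := ring.
Ltac sfield_simplify_eq := field_simplify_eq.
Section Ana.
Local Open Scope R_scope.

Definition a2Ns (z : R) : R := 6 * z - 13 * z ^ 2 + 15 * z ^ 3 - 7 * z ^ 4 - 7 * z ^ 5 + 12 * z ^ 6 - 6 * z ^ 7 + z ^ 8 - 1.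
Definition bNs (z : R) : R := 8 * z - 24 * z ^ 2 + 38 * z ^ 3 - 38 * z ^ 4 + 12 * z ^ 5 + 24 * z ^ 6 - 38 * z ^ 7 + 25 * z ^ 8 - 8 * z ^ 9 + z ^ 10 - 1.
Definition Qf (d : R) : R := (2 + d) ^ 2 * (1 + d).
Definition Nf (d : R) : R := d ^ 2 + d - 1.
Definition P1f (d : R) : R := (2 + d) * d * Qf d - Nf d.
Definition Rf (d : R) : R := sqrt (P1f d ^ 2 - 4 * d ^ 2 * Qf d ^ 2).
Definition sig (d : R) : R := 2 * Qf d / (P1f d + Rf d).
Definition sf (d : R) : R := d * sig d.
Definition Ah (d : R) : R := a2Ns (2 + d) / (2 + d) ^ 4.
Definition Bh (d : R) : R := bNs (2 + d) / (2 + d) ^ 6.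
Definition Gf (d : R) : R := sig d ^ 4 * d ^ 2 * Ah d - sig d ^ 3 * Bh d.
Definition Phi (n k : nat) (d : R) : R := Gf d ^ n - sqrt (sf d) ^ k.

Lemma ineqs d : 0 <= d -> d ^ 2 + d - 1 <= 0 ->
  0 < Qf d /\ 0 < P1f d - 2 * d * Qf d /\ 0 < P1f d + 2 * d * Qf d.
Proof.
intros H0 H1. unfold P1f, Qf, Nf.
assert (HQ : 0 < (2 + d) ^ 2 * (1 + d)) by (apply Rmult_lt_0_compat; snra).
split; [exact HQ|].
destruct H0 as [Hp|Hz].
- assert (0 < d ^ 2 * ((2 + d) ^ 2 * (1 + d))) by (apply Rmult_lt_0_compat; snra).
  assert (0 <= d * ((2 + d) ^ 2 * (1 + d))) by (apply Rmult_le_pos; snra).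
  split; snra.
- subst d. split; snra.
Qed.

Lemma dQ d : ex_derive Qf d. Proof. unfold Qf; auto_derive; auto. Qed.
Lemma dP1 d : ex_derive P1f d. Proof. unfold P1f, Nf; auto_derive; repeat split; apply dQ. Qed.
Lemma da2 d : ex_derive a2Ns d. Proof. unfold a2Ns; auto_derive; auto. Qed.
Lemma dbN d : ex_derive bNs d. Proof. unfold bNs; auto_derive; auto. Qed.

Lemma disc_pos d : 0 <= d -> d ^ 2 + d - 1 <= 0 ->
  0 < P1f d * (P1f d * 1) + - (4 * (d * (d * 1)) * (Qf d * (Qf d * 1))).
Proof.
intros H0 H1. destruct (ineqs d H0 H1) as [HQ [Ha Hb]].
assert (0 < (P1f d - 2 * d * Qf d) * (P1f d + 2 * d * Qf d)) by (apply Rmult_lt_0_compat; auto).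
snra.
Qed.

Lemma den_nz d : 0 <= d -> d ^ 2 + d - 1 <= 0 ->
  P1f d + sqrt (P1f d * (P1f d * 1) + - (4 * (d * (d * 1)) * (Qf d * (Qf d * 1)))) <> 0.
Proof.
intros H0 H1. destruct (ineqs d H0 H1) as [HQ [Ha Hb]].
assert (0 <= sqrt (P1f d * (P1f d * 1) + - (4 * (d * (d * 1)) * (Qf d * (Qf d * 1))))) by apply sqrt_pos.
assert (0 <= d * Qf d) by (apply Rmult_le_pos; slra).
slra.
Qed.

Lemma Gf_derive d : 0 <= d -> d ^ 2 + d - 1 <= 0 -> ex_derive Gf d.
Proof.
intros H0 H1.
unfold Gf, Ah, Bh, sig, Rf.
auto_derive.
repeat split; try apply dQ; try apply dP1; try apply da2; try apply dbN;
  try apply disc_pos; try apply den_nz; auto;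
  try (apply Rgt_not_eq; apply Rlt_gt; repeat apply Rmult_lt_0_compat; slra).
Qed.

Lemma sf_derive d : 0 <= d -> d ^ 2 + d - 1 <= 0 -> ex_derive sf d.
Proof.
intros H0 H1.
unfold sf, sig, Rf.
auto_derive.
repeat split; try apply dQ; try apply dP1; try apply disc_pos; try apply den_nz; auto.
Qed.

Lemma Phi_cont n k d : 0 <= d -> d ^ 2 + d - 1 <= 0 -> continuity_pt (Phi n k) d.
Proof.
intros H0 H1. apply continuity_pt_filterlim. unfold Phi.
apply (continuous_minus (fun x => Gf x ^ n) (fun x => sqrt (sf x) ^ k)).
- apply (continuous_comp Gf (fun x => x ^ n)).
  + apply (@ex_derive_continuous R_AbsRing R_NormedModule), Gf_derive; auto.
  + apply (@ex_derive_continuous R_AbsRing R_NormedModule); auto_derive; auto.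
- apply (continuous_comp (fun x => sqrt (sf x)) (fun x => x ^ k)).
  + apply continuous_sqrt_comp; exact (@ex_derive_continuous R_AbsRing R_NormedModule sf d (sf_derive d H0 H1)).
  + apply (@ex_derive_continuous R_AbsRing R_NormedModule); auto_derive; auto.
Qed.
End Ana.
Section Ana2.
Local Open Scope R_scope.

Lemma Rf_sq d : 0 <= d -> d ^ 2 + d - 1 <= 0 ->
  Rf d * Rf d = P1f d ^ 2 - 4 * d ^ 2 * Qf d ^ 2 /\ 0 < Rf d.
Proof.
intros H0 H1. have H := disc_pos d H0 H1.
unfold Rf. split.
- apply sqrt_sqrt. snra.
- apply sqrt_lt_R0. snra.
Qed.

Lemma facts d : 0 < d -> d ^ 2 + d - 1 <= 0 ->
  0 < sf d < 1 /\ sf d + / sf d = P1f d / (d * Qf d) /\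
  Gf d = sf d ^ 4 * a2Ns (2 + d) / ((2 + d) ^ 4 * d ^ 2)
         - sf d ^ 3 * bNs (2 + d) / ((2 + d) ^ 6 * d ^ 3).
Proof.
intros H0 H1.
destruct (ineqs d (Rlt_le _ _ H0) H1) as [HQ [Ha Hb]].
destruct (Rf_sq d (Rlt_le _ _ H0) H1) as [HR HRp].
assert (HdQ : 0 < d * Qf d) by (apply Rmult_lt_0_compat; auto).
assert (HP : 0 < P1f d) by slra.
assert (HPR : 0 < P1f d + Rf d) by slra.
assert (Hs : sf d = 2 * (d * Qf d) / (P1f d + Rf d)) by (unfold sf, sig; sfield; slra).
assert (Hs0 : 0 < sf d).
{ rewrite Hs. apply Rdiv_lt_0_compat; slra. }
split; [split; [exact Hs0|] | split].
- assert (E : 1 - sf d = (P1f d + Rf d - 2 * (d * Qf d)) / (P1f d + Rf d)) by (rewrite Hs; sfield; slra).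
  assert (0 < 1 - sf d) by (rewrite E; apply Rdiv_lt_0_compat; slra).
  slra.
- rewrite Hs. sfield_simplify_eq.
  + snra.
  + split; slra.
- unfold Gf, Ah, Bh. replace (sig d) with (sf d / d) by (unfold sf; sfield; slra).
  sfield. split; slra.
Qed.
End Ana2.
Local Open Scope ring_scope.
Lemma a2N_conv z : a2Ns z = a2N z.
Proof. rewrite /a2Ns /a2N !RealsE /=. mring. Qed.
Lemma bN_conv z : bNs z = bN z.
Proof. rewrite /bNs /bN !RealsE /=. mring. Qed.

Lemma bridge d : Rlt 0 d -> Rle (Nf d) 0 ->
  [/\ (sqrt (sf d))^-1 != 0, ((sqrt (sf d))^-1) ^+ 2 != 1,
      Pp (sqrt (sf d))^-1 (Nf d / (d * Qf d)) = 0,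
      Gf d = (sf d) ^+ 4 * L11 (sqrt (sf d))^-1 (Nf d / (d * Qf d)) &
      Rlt 0 (sqrt (sf d)) /\ Rlt (sqrt (sf d)) 1].
Proof.
move=> H0 H1.
have [HQ [Ha Hb]] := ineqs d (Rlt_le _ _ H0) H1.
have [[Hs0 Hs1] [F1 F3]] := facts d H0 H1.
have Hq0 : Rlt 0 (sqrt (sf d)) := sqrt_lt_R0 _ Hs0.
have Hqq : sqrt (sf d) * sqrt (sf d) = sf d := sqrt_sqrt _ (Rlt_le _ _ Hs0).
have Hq1 : Rlt (sqrt (sf d)) 1.
  rewrite -sqrt_1; apply: sqrt_lt_1; [exact: Rlt_le | exact: Rle_0_1 | exact: Hs1].
set s := sf d in Hs0 Hs1 F1 F3 Hq0 Hqq Hq1 *.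
set q := sqrt s in Hq0 Hqq Hq1 *.
set y := Nf d / (d * Qf d).
have Hqn : q != 0 by apply/eqP => E; rewrite E in Hq0; exact: (Rlt_irrefl 0).
have Hsn : s != 0 by apply/eqP => E; rewrite E in Hs0; exact: (Rlt_irrefl 0).
have Hdn : d != 0 by apply/eqP => E; rewrite E in H0; exact: (Rlt_irrefl 0).
have HQn : Qf d != 0 by apply/eqP => E; rewrite E in HQ; exact: (Rlt_irrefl 0).
have Hs1n : s != 1 by apply/eqP => E; rewrite E in Hs1; exact: (Rlt_irrefl 1).
have EQ : Qf d = (2 + d) ^+ 2 * (1 + d) by rewrite /Qf !RealsE /=.
have EN : Nf d = d ^+ 2 + d - 1 by rewrite /Nf !RealsE /=.
have EP : P1f d = (2 + d) * d * Qf d - Nf d by rewrite /P1f !RealsE /=.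
rewrite !RealsE in F1 Hqq.
rewrite !RealsE a2N_conv bN_conv /= in F3.
have HM : q^-1 != 0 by rewrite invr_eq0.
have Hdm : 0 < d by apply/RltP.
have Hd1 : 1 + d != 0 by apply/negP => /eqP E; mlra.
have Hd2 : 2 + d != 0 by apply/negP => /eqP E; mlra.
have HM2 : q^-1 ^+ 2 = s^-1 by rewrite -Hqq exprVn expr2 invfM.
have HZ : Zof q^-1 y = 2 + d.
  rewrite /Zof HM2 invrK expr2 Hqq.
  have -> : s^-1 + s = P1f d / (d * Qf d) by rewrite -F1 addrC.
  rewrite /y EP; mfield; rewrite ?HQn ?Hdn ?Hsn ?Hqn //.
have HP : Pp q^-1 y = 0.
  rewrite Pp_eq // HZ /y EN EQ.
  mfield; rewrite ?Hd1 ?Hd2 ?HQn ?Hdn ?Hsn ?Hqn //.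
split.
- exact: HM.
- by rewrite HM2 invr_eq1.
- exact: HP.
- have E5 := R5 q^-1 y HM; rewrite HP mulr0 HZ HM2 in E5.
  have Hd22 : 2 + d - 2 = d by mring.
  rewrite Hd22 in E5.
  set L := L11 q^-1 y in E5 *.
  have E5' : L * ((2 + d) ^+ 6 * d ^+ 3) = a2N (2 + d) * (2 + d) ^+ 2 * d - bN (2 + d) * s^-1.
    by apply/eqP; rewrite -subr_eq0 -E5; apply/eqP; mring.
  have HD : (2 + d) ^+ 6 * d ^+ 3 != 0 by rewrite mulf_neq0 // expf_neq0.
  have -> : L = (a2N (2 + d) * (2 + d) ^+ 2 * d - bN (2 + d) * s^-1) / ((2 + d) ^+ 6 * d ^+ 3).
    by rewrite -E5' mulfK.
  rewrite F3; mfield; rewrite ?Hd1 ?Hd2 ?HQn ?Hdn ?Hsn ?Hqn //.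
- by split.
Qed.
Section Ana3.
Local Open Scope R_scope.

Lemma Rf0 : Rf 0 = 1.
Proof.
unfold Rf. replace (P1f 0 ^ 2 - 4 * 0 ^ 2 * Qf 0 ^ 2) with 1.
- apply sqrt_1.
- unfold P1f, Qf, Nf. sring.
Qed.

Lemma Gf0 : Gf 0 = 1.
Proof.
unfold Gf, sig. rewrite Rf0. unfold Bh, Ah, bNs, a2Ns, P1f, Qf, Nf. sfield.
Qed.

Lemma Phi0 n k : (0 < k)%nat -> Phi n k 0 = 1.
Proof.
intros Hk. unfold Phi. rewrite Gf0 pow1.
unfold sf. rewrite Rmult_0_l sqrt_0.
destruct k as [|k]; [inversion Hk|]. simpl. sring.
Qed.

Definition de : R := (sqrt 5 - 1) / 2.

Lemma de_facts : 0 < de /\ Nf de = 0.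
Proof.
unfold de.
assert (H5 : sqrt 5 * sqrt 5 = 5) by (apply sqrt_sqrt; slra).
assert (H4 : 2 < sqrt 5).
{ assert (0 <= sqrt 5) by apply sqrt_pos. snra. }
split.
- slra.
- unfold Nf. snra.
Qed.

Lemma Nf_le a : 0 <= a -> a <= de -> Nf a <= 0.
Proof.
intros H0 H1. unfold de in H1.
assert (H5 : sqrt 5 * sqrt 5 = 5) by (apply sqrt_sqrt; slra).
assert (H4 : 2 < sqrt 5).
{ assert (0 <= sqrt 5) by apply sqrt_pos. snra. }
unfold Nf. snra.
Qed.
End Ana3.
Local Open Scope ring_scope.
Lemma rat_facts (r : rat) : 0 < r -> r < 8 -> exists m n : nat,
  [/\ numq r = m%:Z, denq r = n%:Z, (0 < m)%nat, (0 < n)%nat & (m < 8 * n)%nat].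
Proof.
move=> H0 H8.
have Hn := numq_gt0 r; rewrite H0 in Hn.
have Hd := denq_gt0 r.
have H8' : (numq r)%:Q < 8 * (denq r)%:Q.
  by rewrite -ltr_pdivrMr ?ltr0z // divq_num_den.
case E1: (numq r) Hn H8' => [m|m] //; case E2: (denq r) Hd => [n|n] //.
move=> Hn' Hm' H8''; exists m, n; split => //.
have : (m%:Z)%:~R < (8 : rat) * (n%:Z)%:~R :> rat by [].
rewrite -!pmulrn -natrM ltr_nat. lia.
Qed.
Local Open Scope ring_scope.

Theorem mainTheorem12 (r : rat) :
  0 < r -> r < 8 -> nonabelian_SL2R_rep_surgery 11 3 r.
Proof.
move=> Hr0 Hr8.
have [m [n [Em En Hm Hn Hmn]]] := rat_facts r Hr0 Hr8.
pose k := (8 * n - m)%nat.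
have Hk : (0 < k)%nat by rewrite /k; lia.
have Hkm : (k < 8 * n)%nat by rewrite /k; lia.
have Hkm' : (8 * n = k + m)%nat by rewrite /k; lia.
have [Hde0 Hde] := de_facts.
have Hend : Rlt (Phi n k de) 0.
  have [HM HM2 HP HG [Hq0 Hq1]] := bridge de Hde0 (Req_le _ _ Hde).
  have E0 : L11 (sqrt (sf de))^-1 (Nf de / (de * Qf de)) = 1.
    rewrite -(R7 _ HM); congr L11; rewrite Hde !RealsE; exact: mul0r.
  rewrite E0 mulr1 in HG.
  have [[Hs0 _] _] := facts de Hde0 (Req_le _ _ Hde).
  have Hqq := sqrt_sqrt (sf de) (Rlt_le _ _ Hs0).
  have q0 : 0 < sqrt (sf de) by apply/RltP.
  have q1 : sqrt (sf de) < 1 by apply/RltP.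
  apply/RltP; rewrite /Phi HG.
  set q := sqrt (sf de) in Hqq q0 q1 *.
  rewrite !RealsE in Hqq; rewrite !RealsE -Hqq.
  have -> : ((q * q) ^+ 4) ^+ n = q ^+ (8 * n).
    by rewrite -expr2 -!exprM; congr (_ ^+ _); lia.
  by rewrite subr_lt0 ltr_iXn2l.
have Hcont : forall a, Rle 0 a /\ Rle a de -> continuity_pt (fun x => Ropp (Phi n k x)) a.
  move=> a [Ha0 Ha1]; apply: continuity_pt_opp; apply: Phi_cont => //.
  exact: (Nf_le a Ha0 Ha1).
have Hf0 : Rlt ((fun x => Ropp (Phi n k x)) 0%R) 0%R.
  rewrite /= Phi0 //. exact: Ropp_lt_gt_0_contravar Rlt_0_1.
have Hfde : Rlt 0%R ((fun x => Ropp (Phi n k x)) de).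
  rewrite /=; exact: Ropp_gt_lt_0_contravar.
have [c [[Hc0 Hc1] Hc]] := IVT_interv _ 0%R de Hcont Hde0 Hf0 Hfde.
have Hc' : Phi n k c = 0%R by rewrite /= in Hc; slra.
have Hcpos : Rlt 0 c.
  case: Hc0 => // E; rewrite -E Phi0 // in Hc'.
  by exfalso; apply: R1_neq_R0.
have HNc : Rle (Nf c) 0 := Nf_le c Hc0 Hc1.
have [HM HM2 HP HG [Hq0 Hq1]] := bridge c Hcpos HNc.
have [[Hs0 _] _] := facts c Hcpos HNc.
have Hqq := sqrt_sqrt (sf c) (Rlt_le _ _ Hs0).
set q := sqrt (sf c) in Hqq Hq0 Hq1 HM HM2 HP HG Hc' *.
exists (Am q^-1), (Bm q^-1 (Nf c / (c * Qf c))); split; last exact: nonab.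
split.
- by rewrite /Am mx2_det mulr0 subr0 (mulfV HM).
- by rewrite /Bm mx2_det mul0r subr0 (mulfV HM).
- exact: rel_ok.
- rewrite Em En -!exprnP; apply: (pow_ok _ _ _ _ HM HM2 HP).
  have H6 := R6 q^-1 (Nf c / (c * Qf c)) HM; rewrite (R3 q^-1 (Nf c / (c * Qf c)) HM) HP !mulr0 subr0 in H6.
  have Hqn : q != 0 by rewrite -invr_eq0.
  move: Hc'; rewrite /Phi -/q HG; rewrite !RealsE in Hqq *.
  rewrite -Hqq => /eqP; rewrite subr_eq0 => /eqP E.
  have E2 : q ^+ k * (q ^+ m * L11 q^-1 (Nf c / (c * Qf c)) ^+ n) = q ^+ k * 1.
    rewrite mulr1 -{2}E mulrA -exprD -Hkm' exprMn; congr (_ * _).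
    by rewrite -expr2 -!exprM; congr (_ ^+ _); lia.
  have E3 : q ^+ m * L11 q^-1 (Nf c / (c * Qf c)) ^+ n = 1.
    by apply: (mulfI _ E2); rewrite expf_neq0.
  rewrite -[LHS]mulr1 -E3 mulrACA -exprMn mulVf // expr1n mul1r -exprMn H6 expr1n //.
Qed.
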